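(* Let $N_{\mathbb{R}}$ be a finite dimensional real vector space with dual $M_{\mathbb{R}}$, let $C\subset N_{\mathbb{R}}$ be a convex set with recession cone $\sigma=\mathrm{rec}(C)$, and let $g\colon C\to\mathbb{R}$ be a closed convex function which is bounded above, with recession function $\mathrm{rec}(g)$. Then: (1) for every $x\in C$, the function $y\mapsto g(x+y)-\mathrm{rec}(g)(y)$ on $\sigma$ is bounded above; (2) if $C$ is closed and $g$ is Lipschitz continuous, then for every $x\in C$ and every $m$ in the interior of $\sigma^\vee$, the function $y\mapsto g(x+y)-\mathrm{rec}(g)(y)+m(y)$ on $\sigma$ is bounded below; (3) if $\sigma$ is full dimensional, then for every $x\in C$ and every $0\neq m\in\sigma^\vee$, the function $y\mapsto g(x+y)-\mathrm{rec}(g)(y)+m(y)$ on $\sigma$ is not bounded above.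
   Context: A convex function $g\colon C\to\mathbb{R}$ is closed if its epigraph $\{(x,y)\in C\times\mathbb{R}:y\ge g(x)\}$ is closed in $N_{\mathbb{R}}\times\mathbb{R}$. The recession cone is $\mathrm{rec}(C)=\{y\in N_{\mathbb{R}}:C+y\subset C\}$. The recession function is $\mathrm{rec}(g)(y)=\lim_{\lambda\to+\infty}(g(x+\lambda y)-g(x))/\lambda$ for $y\in\sigma$, which exists, is independent of $x\in C$, and (for $g$ bounded above) takes finite non-positive values. $\sigma^\vee=\{m\in M_{\mathbb{R}}:m(y)\ge0\ \forall y\in\sigma\}$. *)

(* Defs.v *)
From HB Require Import structures.
From mathcomp Require Import all_boot all_order all_algebra.
From mathcomp Require Import all_classical all_reals all_analysis.
Set Implicit Arguments. Unset Strict Implicit. Unset Printing Implicit Defensive.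
Import Order.TTheory GRing.Theory Num.Theory.
Import numFieldNormedType.Exports.
Local Open Scope classical_set_scope.
Local Open Scope ring_scope.

(* N_R = 'rV[R]_n ; M_R identified with 'rV[R]_n via the standard pairing. *)
Definition pairing (R : realType) (n : nat) (m y : 'rV[R]_n) : R :=
  \sum_(i < n) m ord0 i * y ord0 i.

Definition convex_set_on (R : realType) (n : nat) (C : set 'rV[R]_n) : Prop :=
  forall x y (t : R), C x -> C y -> 0 <= t <= 1 ->
    C (t *: x + (1 - t) *: y).

Definition convex_fun_on (R : realType) (n : nat) (C : set 'rV[R]_n)
  (g : 'rV[R]_n -> R) : Prop :=
  forall x y (t : R), C x -> C y -> 0 <= t <= 1 ->
    g (t *: x + (1 - t) *: y) <= t * g x + (1 - t) * g y.

Definition epigraph (R : realType) (n : nat) (C : set 'rV[R]_n)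
  (g : 'rV[R]_n -> R) : set ('rV[R]_n * R) :=
  [set p | C p.1 /\ g p.1 <= p.2].

Definition closed_fun_on (R : realType) (n : nat) (C : set 'rV[R]_n)
  (g : 'rV[R]_n -> R) : Prop := closed (epigraph C g).

Definition bounded_above_on {T : Type} (R : realType) (A : set T) (f : T -> R) : Prop :=
  exists M : R, forall x, A x -> f x <= M.

Definition bounded_below_on {T : Type} (R : realType) (A : set T) (f : T -> R) : Prop :=
  exists M : R, forall x, A x -> M <= f x.

Definition lipschitz_fun_on (R : realType) (n : nat) (C : set 'rV[R]_n)
  (g : 'rV[R]_n -> R) : Prop :=
  exists L : R, forall x y, C x -> C y -> `|g x - g y| <= L * `|x - y|.

Definition rec_cone (R : realType) (n : nat) (C : set 'rV[R]_n) : set 'rV[R]_n :=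
  [set y | forall x, C x -> C (x + y)].

Definition dual_cone (R : realType) (n : nat) (s : set 'rV[R]_n) : set 'rV[R]_n :=
  [set m | forall y, s y -> 0 <= pairing m y].

(* recession function: limit of (g(x + l y) - g x)/l as l -> +oo, for a
   base point x of C (the limit is independent of x in C) *)
Definition rec_fun (R : realType) (n : nat) (C : set 'rV[R]_n)
  (g : 'rV[R]_n -> R) (y : 'rV[R]_n) : R :=
  let x := xget 0 C in
  lim (((g (x + l *: y) - g x) / l) @[l --> +oo]).

Definition full_dimensional (R : realType) (n : nat) (s : set 'rV[R]_n) : Prop :=
  (interior s) !=set0.

(* Main.v *)
Set Warnings "-all".
Require Import Defs.
From HB Require Import structures.
From mathcomp Require Import all_boot all_order all_algebra.
From mathcomp Require Import all_classical all_reals all_analysis.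
From mathcomp Require Import ring lra.
Import Order.TTheory GRing.Theory Num.Theory.
Import numFieldNormedType.Exports.
Local Open Scope classical_set_scope.
Local Open Scope ring_scope.
Set Implicit Arguments. Unset Strict Implicit. Unset Printing Implicit Defensive.
Definition sl (R : realType) n (g : 'rV[R]_n -> R) (b z : 'rV[R]_n) (l : R) : R :=
  (g (b + l *: z) - g b) / l.

Definition Ssup (R : realType) n (g : 'rV[R]_n -> R) (b z : 'rV[R]_n) : R :=
  sup (range (fun l => sl g b z (Num.max l 1))).

Lemma comb_eq (R : realType) n (b z : 'rV[R]_n) (l1 l2 : R) : l2 != 0 ->
  (l1 / l2) *: (b + l2 *: z) + (1 - l1 / l2) *: b = b + l1 *: z.
Proof.
move=> l20; rewrite scalerDr scalerA mulfVK // scalerBl scale1r.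
by rewrite addrC addrA subrK.
Qed.

Lemma ray_nat (R : realType) n (C : set 'rV[R]_n) b z : C b -> rec_cone C z ->
  forall k : nat, C (b + k%:R *: z).
Proof.
move=> Cb zC; elim=> [|k IH]; first by rewrite scale0r addr0.
by rewrite -[k.+1]addn1 natrD scalerDl scale1r addrA; exact: zC.
Qed.

Lemma ray_in (R : realType) n (C : set 'rV[R]_n) b z l : convex_set_on C ->
  C b -> rec_cone C z -> 0 <= l -> C (b + l *: z).
Proof.
move=> cvx Cb zC l0.
set k := (Num.truncn l).+1.
have kl : l < k%:R by exact: truncnS_gt.
have k0 : 0 < k%:R :> R by rewrite ltr0n.
have := cvx (b + k%:R *: z) b (l / k%:R) (ray_nat Cb zC k) Cb.
rewrite comb_eq ?gt_eqF //; apply.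
by rewrite divr_ge0 ?ler0n //= ler_pdivrMr // mul1r ltW.
Qed.

Lemma rec_cone_scale (R : realType) n (C : set 'rV[R]_n) z l : convex_set_on C ->
  rec_cone C z -> 0 <= l -> rec_cone C (l *: z).
Proof. by move=> cvx zC l0 x Cx; exact: ray_in. Qed.

Lemma sl_mono (R : realType) n (C : set 'rV[R]_n) g b z (l1 l2 : R) :
  convex_set_on C -> convex_fun_on C g -> C b -> rec_cone C z ->
  0 < l1 -> l1 <= l2 -> sl g b z l1 <= sl g b z l2.
Proof.
move=> cvx cvf Cb zC l10 l12.
have l20 : 0 < l2 by apply: lt_le_trans l12.
have := cvf (b + l2 *: z) b (l1 / l2) (ray_in cvx Cb zC (ltW l20)) Cb.
have t01 : 0 <= l1 / l2 <= 1.
  by rewrite divr_ge0 ?(ltW l10) ?(ltW l20) //= ler_pdivrMr // mul1r.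
move=> H0.
have H : g (b + l1 *: z) <= l1 / l2 * g (b + l2 *: z) + (1 - l1 / l2) * g b.
  by rewrite -(comb_eq b z l1 (lt0r_neq0 l20)); exact: H0.
rewrite /sl ler_pdivrMr //.
apply: (@le_trans _ _ (l1 / l2 * g (b + l2 *: z) + (1 - l1 / l2) * g b - g b)).
  by rewrite lerD2r.
by rewrite le_eqVlt; apply/orP; left; apply/eqP; ring.
Qed.

Lemma sl_bnd (R : realType) n (C : set 'rV[R]_n) g b z (l M : R) :
  convex_set_on C -> C b -> rec_cone C z -> (forall x, C x -> g x <= M) ->
  1 <= l -> sl g b z l <= `|M - g b|.
Proof.
move=> cvx Cb zC HM l1.
have l0 : 0 < l by apply: lt_le_trans l1.
rewrite /sl ler_pdivrMr //.
have := HM _ (ray_in cvx Cb zC (ltW l0)) => H.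
apply: (@le_trans _ _ (M - g b)); first by rewrite lerD2r.
apply: le_trans (ler_norm _) _.
by rewrite ler_peMr.
Qed.

Lemma Sf_mono (R : realType) n (C : set 'rV[R]_n) g b z :
  convex_set_on C -> convex_fun_on C g -> C b -> rec_cone C z ->
  {homo (fun l => sl g b z (Num.max l 1)) : a c / a <= c}.
Proof.
move=> cvx cvf Cb zC a c ac /=; apply: (sl_mono cvx cvf Cb zC).
  by rewrite lt_max ltr01 orbT.
by rewrite ge_max !le_max ac lexx !orbT.
Qed.

Lemma S_hub (R : realType) n (C : set 'rV[R]_n) g b z (M : R) :
  convex_set_on C -> C b -> rec_cone C z -> (forall x, C x -> g x <= M) ->
  has_ubound (range (fun l => sl g b z (Num.max l 1))).
Proof.
move=> cvx Cb zC HM; exists `|M - g b| => _ [l _ <-].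
by apply: (sl_bnd cvx Cb zC HM); rewrite le_max lexx orbT.
Qed.

Lemma S_ub (R : realType) n (C : set 'rV[R]_n) g b z (M l : R) :
  convex_set_on C -> convex_fun_on C g -> C b -> rec_cone C z ->
  (forall x, C x -> g x <= M) -> 0 < l -> sl g b z l <= Ssup g b z.
Proof.
move=> cvx cvf Cb zC HM l0.
apply: (@le_trans _ _ (sl g b z (Num.max l 1))).
  by apply: (sl_mono cvx cvf Cb zC) => //; rewrite le_max lexx.
by apply: (ub_le_sup (S_hub cvx Cb zC HM)); exists l.
Qed.

Lemma S_least (R : realType) n (g : 'rV[R]_n -> R) (b z : 'rV[R]_n) (r : R) :
  (forall l, 0 < l -> sl g b z l <= r) -> Ssup g b z <= r.
Proof.
move=> H; apply: ge_sup; first by exists (sl g b z (Num.max 0 1)), 0.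
by move=> _ [l _ <-]; apply: H; rewrite lt_max ltr01 orbT.
Qed.

Lemma S_adh (R : realType) n (C : set 'rV[R]_n) g b z (M e : R) :
  convex_set_on C -> C b -> rec_cone C z ->
  (forall x, C x -> g x <= M) -> 0 < e ->
  exists2 l, 0 < l & Ssup g b z - e < sl g b z l.
Proof.
move=> cvx Cb zC HM e0.
have hs : has_sup (range (fun l => sl g b z (Num.max l 1))).
  by split; [exists (sl g b z (Num.max 0 1)), 0 | exact: S_hub cvx Cb zC HM].
have [_ [l _ <-] H] := sup_adherent e0 hs.
by exists (Num.max l 1) => //; rewrite lt_max ltr01 orbT.
Qed.

Lemma S_cvg (R : realType) n (C : set 'rV[R]_n) g b z (M : R) :
  convex_set_on C -> convex_fun_on C g -> C b -> rec_cone C z ->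
  (forall x, C x -> g x <= M) ->
  sl g b z l @[l --> +oo] --> Ssup g b z.
Proof.
move=> cvx cvf Cb zC HM.
apply: cvg_trans (nondecreasing_cvgr (Sf_mono cvx cvf Cb zC) (S_hub cvx Cb zC HM)).
apply: near_eq_cvg.
near=> l; rewrite /= max_l //.
Unshelve. all: end_near. Qed.

Lemma rec_eq (R : realType) n (C : set 'rV[R]_n) g b z (M : R) :
  convex_set_on C -> convex_fun_on C g -> C b -> rec_cone C z ->
  (forall x, C x -> g x <= M) ->
  rec_fun C g z = Ssup g (xget 0 C) z.
Proof.
move=> cvx cvf Cb zC HM.
rewrite /rec_fun /=; apply: (cvg_lim (@Rhausdorff R)).
exact: (S_cvg cvx cvf (xgetI 0 Cb) zC HM).
Qed.

Lemma L1 (R : realType) n (C : set 'rV[R]_n) (g : 'rV[R]_n -> R) b b' z (M mu : R) :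
  convex_set_on C -> convex_fun_on C g -> closed_fun_on C g -> C b -> C b' ->
  rec_cone C z -> (forall x, C x -> g x <= M) -> 0 < mu ->
  g (b + mu *: z) <= g b + mu * Ssup g b' z.
Proof.
move=> cvx cvf clg Cb Cb' zC HM mu0.
set r := Ssup g b' z.
have key : forall l, 0 < l -> g (b' + l *: z) <= g b' + l * r.
  move=> l l0; have := S_ub cvx cvf Cb' zC HM l0.
  by rewrite /sl ler_pdivrMr // lerBlDl mulrC.
set u := fun t : R => (b + mu *: z + t *: (b' - b), g b + mu * r + t * (g b' - g b)).
have PF : ProperFilter ((0:R)^'+) by exact: at_right_proper_filter.
have Hn : \forall t \near (0:R)^'+, epigraph C g (u t).
  near=> t.
  have t0 : 0 < t by near: t; exact: nbhs_right_gt.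
  have t1 : t <= 1 by near: t; apply: nbhs_right_le; exact: ltr01.
  set x := b' + (mu / t) *: z.
  have Cx : C x := ray_in cvx Cb' zC (ltW (divr_gt0 mu0 t0)).
  have E : t *: x + (1 - t) *: b = b + mu *: z + t *: (b' - b).
    apply/rowP => j; rewrite !mxE; field; exact: lt0r_neq0 t0.
  have t01 : 0 <= t <= 1 by rewrite (ltW t0) t1.
  split => /=; rewrite -E; first exact: cvx.
  apply: le_trans (cvf _ _ _ Cx Cb t01) _.
  have Hk := key _ (divr_gt0 mu0 t0).
  apply: (@le_trans _ _ (t * (g b' + mu / t * r) + (1 - t) * g b)).
    by rewrite lerD2r ler_pM2l.
  rewrite le_eqVlt; apply/orP; left; apply/eqP; field; exact: lt0r_neq0 t0.
have Hc : u x @[x --> (0:R)^'+] --> u 0.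
  apply: (@cvg_at_right_filter R _ u 0 (u 0)).
  have h1 : (b + mu *: z + x *: (b' - b)) @[x --> (0:R)] --> b + mu *: z + 0 *: (b' - b).
    apply: cvgD; first exact: cvg_cst.
    by apply: cvgZ; [exact: cvg_id | exact: cvg_cst].
  have h2 : (g b + mu * r + x * (g b' - g b)) @[x --> (0:R)] --> g b + mu * r + 0 * (g b' - g b).
    apply: cvgD; first exact: cvg_cst.
    by apply: cvgM; [exact: cvg_id | exact: cvg_cst].
  exact: (cvg_pair h1 h2).
have := @closed_cvg _ _ _ PF u _ clg Hn (u 0) Hc.
by rewrite /u /epigraph /= => -[_]; rewrite scale0r addr0 mul0r addr0.
Unshelve. all: end_near. Qed.

Lemma S_indep (R : realType) n (C : set 'rV[R]_n) (g : 'rV[R]_n -> R) b b' z (M : R) :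
  convex_set_on C -> convex_fun_on C g -> closed_fun_on C g -> C b -> C b' ->
  rec_cone C z -> (forall x, C x -> g x <= M) ->
  Ssup g b z = Ssup g b' z.
Proof.
move=> cvx cvf clg Cb Cb' zC HM.
have H : forall b b', C b -> C b' -> Ssup g b z <= Ssup g b' z.
  move=> c c' Cc Cc'; apply: S_least => l l0.
  have := L1 cvx cvf clg Cc Cc' zC HM l0.
  by rewrite /sl ler_pdivrMr // -lerBlDl mulrC.
by apply/eqP; rewrite eq_le !H.
Qed.

Lemma pairingD (R : realType) n (m a c : 'rV[R]_n) :
  pairing m (a + c) = pairing m a + pairing m c.
Proof. by rewrite /pairing -big_split; apply: eq_bigr => i _; rewrite mxE mulrDr. Qed.

Lemma pairingZ (R : realType) n (m a : 'rV[R]_n) (c : R) :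
  pairing m (c *: a) = c * pairing m a.
Proof. by rewrite /pairing mulr_sumr; apply: eq_bigr => i _; rewrite mxE mulrCA. Qed.

Lemma pairing_self_gt0 (R : realType) n (m : 'rV[R]_n) : m != 0 -> 0 < pairing m m.
Proof.
move=> m0.
have mul_self_ge0 : forall x : R, 0 <= x * x by move=> x; rewrite -expr2 sqr_ge0.
rewrite lt_def; apply/andP; split; last first.
  by apply: sumr_ge0 => i _; exact: mul_self_ge0.
move: m0; apply: contra => /eqP H; apply/eqP/rowP => j; rewrite mxE.
have := @psumr_eq0P _ _ _ _ (fun i _ => mul_self_ge0 (m ord0 i)) H j isT.
by move/eqP; rewrite mulf_eq0 orbb => /eqP.
Qed.

Lemma S_hom (R : realType) n (C : set 'rV[R]_n) g b z (M l : R) :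
  convex_set_on C -> convex_fun_on C g -> C b -> rec_cone C z ->
  (forall x, C x -> g x <= M) -> 0 < l ->
  Ssup g b (l *: z) <= l * Ssup g b z.
Proof.
move=> cvx cvf Cb zC HM l0; apply: S_least => k k0.
have kl0 : 0 < k * l by rewrite mulr_gt0.
have := S_ub cvx cvf Cb zC HM kl0.
have -> : sl g b (l *: z) k = l * sl g b z (k * l).
  rewrite /sl scalerA; field; rewrite ?lt0r_neq0 //.
by move=> H; rewrite ler_pM2l.
Qed.

Lemma exists_pos_dir (R : realType) n (s : set 'rV[R]_n) (m : 'rV[R]_n) :
  full_dimensional s -> dual_cone s m -> m != 0 ->
  exists y, s y /\ 0 < pairing m y.
Proof.
move=> [y0 /= /nbhs_ballP [e e0 He]] dm m0.
have nm : 0 < `|m| by rewrite normr_gt0.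
set c := e / (2 * `|m|).
have c0 : 0 < c by rewrite divr_gt0 // mulr_gt0.
have sy1 : s (y0 + c *: m).
  apply: He; rewrite -ball_normE /ball_ /= opprD addrA subrr sub0r normrN normrZ.
  rewrite gtr0_norm //.
  have -> : c * `|m| = e / 2 by rewrite /c; field; rewrite gt_eqF.
  by rewrite ltr_pdivrMr // ltr_pMr // ltr1n.
exists (y0 + c *: m); split => //.
rewrite pairingD pairingZ.
have := dm _ (He _ (ballxx _ e0)).
have := pairing_self_gt0 m0.
by move=> h1 h2; apply: ltr_wpDl => //; rewrite mulr_gt0.
Qed.

Lemma pairingC (R : realType) n (a c : 'rV[R]_n) : pairing a c = pairing c a.
Proof. by rewrite /pairing; apply: eq_bigr => i _; rewrite mulrC. Qed.

Lemma pairing_self_ge (R : realType) n (y : 'rV[R]_n) : `|y| ^+ 2 <= pairing y y.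
Proof.
have sq : forall x : R, 0 <= x * x by move=> x; rewrite -expr2 sqr_ge0.
case: (eqVneq `|y| 0) => [->|ny].
  by rewrite expr0n /=; apply: sumr_ge0 => i _; exact: sq.
have [[i0 j] /= Hj] := @mx_norm_neq0 _ _ _ y ny.
have -> : `|y| = `|y i0 j| by exact: Hj.
rewrite real_normK ?num_real // expr2 /pairing (bigD1 j) //= (ord1 i0).
by rewrite lerDl; apply: sumr_ge0 => i _; exact: sq.
Qed.

Lemma sl_lip (R : realType) n (C : set 'rV[R]_n) (g : 'rV[R]_n -> R) x u u' (L l : R) :
  convex_set_on C -> C x -> rec_cone C u -> rec_cone C u' ->
  (forall a b, C a -> C b -> `|g a - g b| <= L * `|a - b|) -> 0 < l ->
  `|sl g x u l - sl g x u' l| <= L * `|u - u'|.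
Proof.
move=> cvx Cx uC u'C HL l0; rewrite /sl.
have -> : (g (x + l *: u) - g x) / l - (g (x + l *: u') - g x) / l =
          (g (x + l *: u) - g (x + l *: u')) / l by field; rewrite gt_eqF.
rewrite normrM normfV (gtr0_norm l0) ler_pdivrMr //.
apply: le_trans (HL _ _ (ray_in cvx Cx uC (ltW l0)) (ray_in cvx Cx u'C (ltW l0))) _.
have -> : x + l *: u - (x + l *: u') = l *: (u - u').
  by rewrite opprD addrACA subrr add0r scalerBr.
rewrite normrZ gtr0_norm //.
by rewrite le_eqVlt; apply/orP; left; apply/eqP; ring.
Qed.

Lemma rec_cone0 (R : realType) n (C : set 'rV[R]_n) : rec_cone C 0.
Proof. by move=> x Cx; rewrite addr0. Qed.

Lemma sl0 (R : realType) n (g : 'rV[R]_n -> R) x l : sl g x 0 l = 0.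
Proof. by rewrite /sl scaler0 addr0 subrr mul0r. Qed.

Lemma sl_le_lip (R : realType) n (C : set 'rV[R]_n) (g : 'rV[R]_n -> R) x u (L l : R) :
  convex_set_on C -> C x -> rec_cone C u ->
  (forall a b, C a -> C b -> `|g a - g b| <= L * `|a - b|) -> 0 < l ->
  `|sl g x u l| <= L * `|u|.
Proof.
move=> cvx Cx uC HL l0.
have := sl_lip cvx Cx uC (@rec_cone0 _ _ C) HL l0.
by rewrite sl0 !subr0.
Qed.

Lemma rec_cone_closed (R : realType) n (C : set 'rV[R]_n) :
  closed C -> closed (rec_cone C).
Proof.
move=> Ccl.
have -> : rec_cone C = \bigcap_(b in C) ((fun y => b + y) @^-1` C).
  by apply/seteqP; split => y /= H b Cb; exact: H.
apply: closed_bigI => b Cb; apply: preimage_closed => // y _.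
exact: (@cvgD _ _ _ (nbhs y) _ (fun=> b) id b y (cvg_cst b) cvg_id).
Qed.

Lemma dual_int_bound (R : realType) n (s : set 'rV[R]_n) (m : 'rV[R]_n) :
  interior (dual_cone s) m ->
  exists2 eps : R, 0 < eps & forall y, s y -> eps * `|y| <= pairing m y.
Proof.
move=> /nbhs_ballP [e e0 He].
have e2 : 0 < e / 2 by rewrite divr_gt0.
exists (e / 2) => // y sy.
have pm0 : 0 <= pairing m y by exact: (He _ (ballxx _ e0)).
case: (eqVneq `|y| 0) => [->|ny]; first by rewrite mulr0.
have ny0 : 0 < `|y| by rewrite lt_def ny normr_ge0.
set c := e / 2 / `|y|.
have c0 : 0 < c by rewrite divr_gt0.
have hw : dual_cone s (m - c *: y).
  apply: He; rewrite -ball_normE /ball_ /= opprB addrC subrK normrZ gtr0_norm //.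
  rewrite /c divfK ?gt_eqF //.
  by rewrite ltr_pdivrMr // ltr_pMr // ltr1n.
have := hw _ sy; rewrite -scaleNr pairingC pairingD pairingZ (pairingC y m).
have := pairing_self_ge y.
have -> : e / 2 * `|y| = c * `|y| ^+ 2 by rewrite /c expr2; field; rewrite gt_eqF.
move=> h1 h2.
have h3 : c * `|y| ^+ 2 <= c * pairing y y by rewrite ler_pM2l.
move: h2 h3; rewrite mulNr; set p := c * pairing y y; set q := pairing m y.
lra.
Qed.

Lemma unif_approx (R : realType) n (C : set 'rV[R]_n) (g : 'rV[R]_n -> R) x (M L eta : R) :
  convex_set_on C -> convex_fun_on C g -> closed C -> C x ->
  (forall x, C x -> g x <= M) ->
  (forall a b, C a -> C b -> `|g a - g b| <= L * `|a - b|) -> 0 < eta ->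
  exists M0 : R, forall u l, rec_cone C u -> `|u| = 1 -> M0 < l ->
    Ssup g x u - eta <= sl g x u l.
Proof.
move=> cvx cvf Ccl Cx HM HL eta0.
set K := rec_cone C `&` [set u | `|u| = 1].
have cK : compact K.
  have hb : [bounded u | u in K].
    rewrite /bounded_near; near=> B; move=> u [_ /= ->].
    near: B; apply: nbhs_pinfty_ge; exact: num_real.
  apply: (bounded_closed_compact hb).
  apply: closedI; first exact: rec_cone_closed.
  apply: (@preimage_closed _ _ (fun u : 'rV[R]_n => `|u|) [set x : R | x = 1]).
    by move=> u _; exact: norm_continuous.
  exact: closed_eq.
have e3 : 0 < eta / 3 by rewrite divr_gt0.
have := (iffLR (compact_near_coveringP K)) cK R (nbhs +oo)
  (fun l u => K u -> Ssup g x u - eta <= sl g x u l) _.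
case.
- move=> u [uC u1].
  have [l0 l00 Hl0] := S_adh cvx Cx uC HM e3.
  have L1 : 0 < `|L| + 1 by rewrite ltr_wpDl.
  set r := eta / 3 / (`|L| + 1).
  have r0 : 0 < r by rewrite divr_gt0.
  exists (ball u r, [set l | l0 < l]) => /=.
    split; first exact: nbhsx_ballx.
    by apply: nbhs_pinfty_gt; exact: num_real.
  move=> [u' l] /= [bu ll] [u'C _].
  have l0' : 0 < l by apply: lt_trans ll.
  move: bu; rewrite -ball_normE /ball_ /= => bu.
  have hLr : forall v : 'rV[R]_n, `|v| < r -> L * `|v| <= eta / 3.
    move=> v hv; apply: (@le_trans _ _ (`|L| * r)).
      apply: (@le_trans _ _ (`|L| * `|v|)).
        by apply: ler_wpM2r; [exact: normr_ge0 | exact: ler_norm].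
      by apply: ler_wpM2l; [exact: normr_ge0 | exact: ltW].
    rewrite /r mulrA ler_pdivrMr // mulrC ler_pM2l //; lra.
  have h1 := sl_lip cvx Cx uC u'C HL l0'.
  have hmono := sl_mono cvx cvf Cx uC l00 (ltW ll).
  have hS : Ssup g x u' <= Ssup g x u + eta / 3.
    apply: S_least => k k0.
    have := sl_lip cvx Cx uC u'C HL k0; rewrite ler_norml => /andP[h _].
    have := S_ub cvx cvf Cx uC HM k0.
    have := hLr _ bu.
    lra.
  have := hLr _ bu; move: h1; rewrite ler_norml => /andP[h1 h1'].
  lra.
- move=> M0 [_ HM0]; exists M0 => u l uC u1 lM0.
  exact: (HM0 l lM0 u (conj uC u1)).
Unshelve. all: end_near. Qed.

Unset Implicit Arguments.

Theorem lemma2p27 (R : realType) (n : nat) (C : set 'rV[R]_n)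
  (g : 'rV[R]_n -> R) :
  convex_set_on C -> convex_fun_on C g -> closed_fun_on C g ->
  bounded_above_on C g ->
  [/\ (forall x, C x ->
         bounded_above_on (rec_cone C)
           (fun y => g (x + y) - rec_fun C g y)),
      (closed C -> lipschitz_fun_on C g ->
       forall x m, C x -> interior (dual_cone (rec_cone C)) m ->
         bounded_below_on (rec_cone C)
           (fun y => g (x + y) - rec_fun C g y + pairing m y))
    & (full_dimensional (rec_cone C) ->
       forall x m, C x -> dual_cone (rec_cone C) m -> m != 0 ->
         ~ bounded_above_on (rec_cone C)
           (fun y => g (x + y) - rec_fun C g y + pairing m y))].
Proof.
move=> cvx cvf clg [M HM].
have Hrec : forall x y, C x -> rec_cone C y -> rec_fun C g y = Ssup g x y.
  move=> x y Cx yC; rewrite (rec_eq cvx cvf Cx yC HM).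
  exact: (S_indep cvx cvf clg (xgetI 0 Cx) Cx yC HM).
split.
- move=> x Cx; exists (g x) => y yC; rewrite (Hrec x y Cx yC).
  have := S_ub cvx cvf Cx yC HM ltr01; rewrite /sl divr1 scale1r => H.
  by rewrite lerBlDl -lerBlDr.
- move=> Ccl [L HL] x m Cx Hm.
  have [eps eps0 Heps] := dual_int_bound Hm.
  have e2 : 0 < eps / 2 by rewrite divr_gt0.
  have [M0 HM0] := unif_approx cvx cvf Ccl Cx HM HL e2.
  set M1 := Num.max M0 0.
  have M10 : 0 <= M1 by rewrite le_max lexx orbT.
  have LM1 : 0 <= `|L| * M1 by rewrite mulr_ge0.
  exists (g x - 2 * (`|L| * M1)) => y yC.
  rewrite (Hrec x y Cx yC).
  have hp := Heps y yC.
  case: (ltP M1 `|y|) => hy.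
  + set lam := `|y| in hp hy *.
    have lam0 : 0 < lam by apply: le_lt_trans hy.
    set u := lam^-1 *: y.
    have uC : rec_cone C u by apply: rec_cone_scale cvx yC _; rewrite invr_ge0 ltW.
    have u1 : `|u| = 1 by rewrite normrZ gtr0_norm ?invr_gt0 // mulVf ?gt_eqF.
    have yE : y = lam *: u by rewrite /u scalerA divff ?gt_eqF // scale1r.
    have hM0 : M0 <= M1 by rewrite le_max lexx.
    have hu := HM0 u lam uC u1 (le_lt_trans hM0 hy).
    have hh : Ssup g x y <= lam * Ssup g x u.
      by rewrite {1}yE; exact: S_hom cvx cvf Cx uC HM lam0.
    have Eg : g (x + y) = g x + lam * sl g x u lam.
      by rewrite {1}yE /sl; field; rewrite gt_eqF.
    rewrite Eg.
    have h4 : lam * (Ssup g x u - eps / 2) <= lam * sl g x u lam.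
      by rewrite ler_pM2l.
    have h5 : 0 <= lam * eps by rewrite mulr_ge0 ?ltW.
    nra.
  + have h1 := sl_le_lip cvx Cx yC HL ltr01.
    rewrite /sl divr1 scale1r ler_norml in h1; case/andP: h1 => h1 _.
    have h2 : Ssup g x y <= L * `|y|.
      apply: S_least => l l0.
      by have := sl_le_lip cvx Cx yC HL l0; rewrite ler_norml => /andP[_ ->].
    have h3 : L * `|y| <= `|L| * M1.
      apply: (@le_trans _ _ (`|L| * `|y|)).
        by apply: ler_wpM2r; [exact: normr_ge0 | exact: ler_norm].
      by apply: ler_wpM2l; [exact: normr_ge0 | exact: hy].
    have h5 : 0 <= eps * `|y| by apply: mulr_ge0; [exact: ltW | exact: normr_ge0].
    lra.
- move=> fd x m Cx dm m0 [B HB].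
  have [y [yC my]] := exists_pos_dir fd dm m0.
  set d := pairing m y in my.
  have d2 : 0 < d / 2 by rewrite divr_gt0.
  have [l0 l00 Hl0] := S_adh cvx Cx yC HM d2.
  set lam := l0 + (2 / d) * `|B - g x| + 1.
  have lam1 : 0 <= (2 / d) * `|B - g x| by apply: mulr_ge0 => //; apply: divr_ge0 => //; exact: ltW.
  have lam0 : 0 < lam by rewrite /lam; lra.
  have lamge : l0 <= lam by rewrite /lam; lra.
  have lamB : B - g x < lam * (d / 2).
    have -> : lam * (d / 2) = l0 * (d / 2) + `|B - g x| + d / 2.
      by rewrite /lam; field; rewrite gt_eqF.
    have := ler_norm (B - g x); have := mulr_gt0 l00 d2; lra.
  have wC := rec_cone_scale cvx yC (ltW lam0).
  have := HB _ wC; rewrite (Hrec x _ Cx wC) pairingZ -/d.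
  have Hh := S_hom cvx cvf Cx yC HM lam0.
  have Hm := sl_mono cvx cvf Cx yC l00 lamge.
  have Eg : g (x + lam *: y) = g x + lam * sl g x y lam.
    by rewrite /sl; field; rewrite gt_eqF.
  rewrite Eg => Hf.
  have P : 0 < lam * (sl g x y lam - (Ssup g x y - d / 2)).
    by rewrite mulr_gt0 // subr_gt0; exact: lt_le_trans Hl0 Hm.
  nra.
Qed.
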